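(* Let $R$ be a commutative Noetherian ring, $M$ a faithful primeful $R$-module having at least one prime submodule, $X=\mathrm{Spec}(M)$, $N$ an $R$-module, $K\le M$, and $U=X\setminus V(K)$. Then the cokernel of $\epsilon_N^U:N\to\mathcal{A}(N,M)(U)$ is $(K:M)$-torsion.
   Context: For a submodule $L$ of an $R$-module $M$, $(L:M)=\{r\in R\mid rM\subseteq L\}$. A submodule $P$ of $M$ is prime if $P\neq M$ and whenever $rm\in P$ ($r\in R$, $m\in M$) then $r\in (P:M)$ or $m\in P$. $\mathrm{Spec}(M)$ is the set of prime submodules. $M$ is faithful if $\mathrm{Ann}_R(M)=0$; primeful if $M=0$ or $\mathrm{Spec}(M)\to\mathrm{Spec}(R/\mathrm{Ann}(M))$, $P\mapsto(P:M)/\mathrm{Ann}(M)$, is surjective. For $L\le M$, $V(L)=\{P\in X\mid (P:M)\supseteq (L:M)\}$; these are the closed sets of the Zariski topology. For open $U\subseteq X$, $\mathrm{Supp}(U)=\{(P:M)\mid P\in U\}$. $\mathcal{A}(N,M)(U)$ is the $R$-module of families $(\gamma_{\mathfrak p})_{\mathfrak p\in\mathrm{Supp}(U)}\in\prod_{\mathfrak p\in\mathrm{Supp}(U)}N_{\mathfrak p}$ such that for each $Q\in U$ there exist an open neighbourhood $W\subseteq U$ of $Q$ and $s\in R$, $m\in N$ with $s\notin(P:M)$ and $\gamma_{(P:M)}=m/s$ for every $P\in W$. $\epsilon_N^U(n)=(n/1)_{\mathfrak p\in\mathrm{Supp}(U)}$. A module $H$ is $I$-torsion if every element is annihilated by some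 power of $I$. *)

(* Defs.v *)
From HB Require Import structures.
From mathcomp Require Import all_boot all_order all_algebra.
Set Implicit Arguments. Unset Strict Implicit. Unset Printing Implicit Defensive.
Import GRing.Theory.
Local Open Scope ring_scope.

Section ModuleDefs.
Variable R : comPzRingType.

Definition ideal (I : R -> Prop) : Prop :=
  I 0 /\ (forall x y, I x -> I y -> I (x + y)) /\ (forall r x, I x -> I (r * x)).

Definition prime_ideal (p : R -> Prop) : Prop :=
  ideal p /\ ~ p 1 /\ (forall r s, p (r * s) -> p r \/ p s).

Definition fin_gen_ideal (I : R -> Prop) : Prop :=
  exists s : seq R, forall x,
    I x <-> exists c : seq R, size c = size s /\
                              x = \sum_(i < size s) c`_i * s`_i.

Definition noetherian_ring : Prop :=
  forall I : R -> Prop, ideal I -> fin_gen_ideal I.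

Definition ideal_mul (I J : R -> Prop) (x : R) : Prop :=
  exists s : seq (R * R),
    (forall q, q \in s -> I q.1 /\ J q.2) /\ x = \sum_(q <- s) q.1 * q.2.

Fixpoint ideal_pow (I : R -> Prop) (k : nat) : R -> Prop :=
  match k with
  | 0 => fun _ => True
  | k'.+1 => ideal_mul I (ideal_pow I k')
  end.

Variable M : lmodType R.

Definition submodule (L : M -> Prop) : Prop :=
  L 0 /\ (forall x y, L x -> L y -> L (x + y)) /\ (forall r x, L x -> L (r *: x)).

Definition colon (L : M -> Prop) (r : R) : Prop := forall m : M, L (r *: m).

Definition annihilator (r : R) : Prop := forall m : M, r *: m = 0.

Definition prime_submodule (P : M -> Prop) : Prop :=
  submodule P /\ (exists m, ~ P m) /\
  (forall (r : R) (m : M), P (r *: m) -> colon P r \/ P m).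

Definition faithful : Prop := forall r : R, annihilator r -> r = 0.

(* primeful: M = 0, or P |-> (P:M)/Ann(M) is onto Spec(R/Ann(M)); the prime
   ideals of R/Ann(M) are the q/Ann(M) with q a prime ideal of R containing
   Ann(M) *)
Definition primeful : Prop :=
  (forall m : M, m = 0) \/
  (forall q : R -> Prop, prime_ideal q -> (forall r, annihilator r -> q r) ->
     exists P, prime_submodule P /\ forall r, colon P r <-> q r).

Definition Vset (L : M -> Prop) (P : M -> Prop) : Prop :=
  prime_submodule P /\ (forall r, colon L r -> colon P r).

Definition zariski_open (W : (M -> Prop) -> Prop) : Prop :=
  (forall P, W P -> prime_submodule P) /\
  exists L, submodule L /\ forall P, W P <-> (prime_submodule P /\ ~ Vset L P).

Definition Supp (U : (M -> Prop) -> Prop) (p : R -> Prop) : Prop :=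
  exists P, U P /\ p = colon P.

Variable N : lmodType R.

(* An element of the localization N_p is represented by a fraction (m, s) with
   s ∉ p; two fractions are equal in N_p iff u (s' m - s m') = 0 for some
   u ∉ p. *)
Definition loc_eq (p : R -> Prop) (x y : N * R) : Prop :=
  exists u : R, ~ p u /\ u *: (y.2 *: x.1 - x.2 *: y.1) = 0.

(* A family (γ_p)_{p ∈ Supp U} is represented by a function γ giving, for each
   p, a representing fraction γ p of γ_p ∈ N_p. *)
Definition A_section (U : (M -> Prop) -> Prop) (g : (R -> Prop) -> N * R) : Prop :=
  (forall p, Supp U p -> ~ p (g p).2) /\
  (forall Q, U Q ->
     exists W, zariski_open W /\ (forall P, W P -> U P) /\ W Q /\
       exists (s : R) (m : N), forall P, W P ->
         ~ colon P s /\ loc_eq (colon P) (g (colon P)) (m, s)).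

Definition fam_scale (r : R) (g : (R -> Prop) -> N * R) : (R -> Prop) -> N * R :=
  fun p => (r *: (g p).1, (g p).2).

Definition in_image_eps (U : (M -> Prop) -> Prop) (g : (R -> Prop) -> N * R) : Prop :=
  exists n : N, forall p, Supp U p -> loc_eq p (g p) (n, 1).

Definition coker_eps_torsion (I : R -> Prop) (U : (M -> Prop) -> Prop) : Prop :=
  forall g, A_section U g ->
    exists k : nat, forall r, ideal_pow I k r -> in_image_eps U (fam_scale r g).

End ModuleDefs.

(* Main.v *)
Require Import Defs.
From mathcomp Require Import all_boot all_order all_algebra ring zify.
From Stdlib Require Import Classical ClassicalEpsilon.
Set Implicit Arguments. Unset Strict Implicit. Unset Printing Implicit Defensive.
Import GRing.Theory.
Local Open Scope ring_scope.

Section Aux.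
Variable R : comPzRingType.

Lemma id0 (I : R -> Prop) : ideal I -> I 0. Proof. by case. Qed.
Lemma idD (I : R -> Prop) x y : ideal I -> I x -> I y -> I (x + y).
Proof. by case=> _ [H _]; apply: H. Qed.
Lemma idM (I : R -> Prop) r x : ideal I -> I x -> I (r * x).
Proof. by case=> _ [_ H]; apply: H. Qed.
Lemma idMr (I : R -> Prop) r x : ideal I -> I x -> I (x * r).
Proof. by move=> hI hx; rewrite mulrC; apply: idM. Qed.

Lemma id_sum (I : R -> Prop) (T : eqType) (l : seq T) (f : T -> R) :
  ideal I -> (forall t, t \in l -> I (f t)) -> I (\sum_(t <- l) f t).
Proof.
move=> hI; elim: l => [|a l IH] H; first by rewrite big_nil; apply: id0.
rewrite big_cons; apply: idD => //; first by apply: H; rewrite in_cons eqxx.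
by apply: IH => t ht; apply: H; rewrite in_cons ht orbT.
Qed.

Lemma id_sum_ord (I : R -> Prop) n (f : 'I_n -> R) :
  ideal I -> (forall i, I (f i)) -> I (\sum_(i < n) f i).
Proof.
move=> hI H; elim/big_ind: _ => //; first exact: id0.
by move=> x y; apply: idD.
Qed.

Lemma id_pow_closed (I : R -> Prop) x m n : ideal I -> (m <= n)%N -> I (x ^+ m) -> I (x ^+ n).
Proof.
move=> hI /subnK <- h; rewrite exprD; exact: idM.
Qed.

Lemma prime_not_pow (p : R -> Prop) x e : prime_ideal p -> ~ p x -> ~ p (x ^+ e).
Proof.
case=> hI [h1 hp] hx; elim: e => [|e IH]; first by rewrite expr0.
by rewrite exprS => /hp [].
Qed.

Lemma prime_notM (p : R -> Prop) x y : prime_ideal p -> ~ p x -> ~ p y -> ~ p (x * y).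
Proof. by case=> _ [_ hp] hx hy /hp []. Qed.

Lemma uniform_bound (T : eqType) (Q : nat -> T -> Prop) (l : seq T) :
  (forall n m y, (n <= m)%N -> Q n y -> Q m y) ->
  (forall y, y \in l -> exists n, Q n y) -> exists N, forall y, y \in l -> Q N y.
Proof.
move=> mono; elim: l => [|a l IH] H; first by exists 0%N.
have [n hn] := H a (mem_head _ _).
have [N hN] : exists N, forall y, y \in l -> Q N y.
  by apply: IH => y hy; apply: H; rewrite in_cons hy orbT.
exists (maxn n N) => y; rewrite in_cons => /orP [/eqP -> | hy].
  by apply: mono hn; exact: leq_maxl.
by apply: mono (hN y hy); exact: leq_maxr.
Qed.

Definition avoids (a : R -> Prop) (x : R) (J : R -> Prop) :=
  ideal J /\ (forall r, a r -> J r) /\ (forall n, ~ J (x ^+ n)).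

Lemma exists_max (a : R -> Prop) x : noetherian_ring R -> avoids a x a ->
  exists J, avoids a x J /\ forall J', avoids a x J' -> (forall r, J r -> J' r) -> forall r, J' r -> J r.
Proof.
move=> noeth h0.
apply: NNPP => hno.
have H : forall J, avoids a x J -> exists J', avoids a x J' /\ (forall r, J r -> J' r) /\ exists r, J' r /\ ~ J r.
  move=> J hJ; apply: NNPP => hn; apply: hno; exists J; split => // J' hJ' sub r hr.
  apply: NNPP => hr'; apply: hn; exists J'; split => //; split => //; by exists r.
pose step (J : R -> Prop) : R -> Prop :=
  match excluded_middle_informative (avoids a x J) with
  | left h => proj1_sig (constructive_indefinite_description _ (H J h))
  | right _ => J end.
have stepP : forall J, avoids a x J -> avoids a x (step J) /\ (forall r, J r -> step J r) /\ exists r, step J r /\ ~ J r.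
  move=> J hJ; rewrite /step; case: excluded_middle_informative => // h.
  by case: constructive_indefinite_description.
pose c n := iter n step a.
have cS : forall n, avoids a x (c n).
  by elim=> [|n IH] //=; case: (stepP _ IH).
have cmono : forall m n r, (m <= n)%N -> c m r -> c n r.
  move=> m n r /subnK <-; elim: (n - m)%N => [|k IH] // hr.
  rewrite addSn /=; case: (stepP _ (cS (k + m)%N)) => _ [+ _]; apply; exact: IH.
pose Uo r := exists n, c n r.
have Uideal : ideal Uo.
  split; first by exists 0%N; apply: id0; case: h0.
  split.
    move=> y z [n hn] [m hm]; exists (maxn n m); apply: idD; first by case: (cS (maxn n m)).
      by apply: cmono hn; apply: leq_maxl.
    by apply: cmono hm; apply: leq_maxr.
  move=> r y [n hn]; exists n; apply: idM => //; by case: (cS n).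
have [s hs] := noeth _ Uideal.
have [N hN] : exists N, forall y, y \in s -> c N y.
  apply: uniform_bound; first by move=> n m y; apply: cmono.
  move=> y /(nthP 0) [i hi <-].
  have := (hs s`_i).2; case.
    exists [seq (j == i)%:R | j <- iota 0 (size s)]; split; first by rewrite size_map size_iota.
    rewrite (bigD1 (Ordinal hi)) //= big1 ?addr0.
      by rewrite (nth_map 0%N) ?size_iota // nth_iota // add0n eqxx mul1r.
    move=> j hj; rewrite (nth_map 0%N) ?size_iota // nth_iota // add0n.
    rewrite (_ : (nat_of_ord j == i) = false) ?mul0r //; apply/negbTE; move: hj; apply: contra => /eqP hji; apply/eqP/val_inj; exact: hji.
  by move=> n hn; exists n.
have UsubN : forall r, Uo r -> c N r.
  move=> r /(hs r) [cs [hsz ->]]; apply: id_sum_ord; first by case: (cS N).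
  move=> i; apply: idM; first by case: (cS N).
  apply: hN; exact: mem_nth.
case: (stepP _ (cS N)) => _ [_ [r [hr hnr]]]; apply: hnr; apply: UsubN; by exists N.+1.
Qed.

Lemma krull (a : R -> Prop) x : noetherian_ring R -> ideal a -> (forall n, ~ a (x ^+ n)) ->
  exists p, prime_ideal p /\ (forall r, a r -> p r) /\ ~ p x.
Proof.
move=> noeth ha hx.
have [J [[hJ [haJ hxJ]] hmax]] := @exists_max a x noeth (conj ha (conj (fun r h => h) hx)).
exists J; split; last by split => // h; apply: (hxJ 1%N); rewrite expr1.
split => //; split; first by move=> h; apply: (hxJ 0%N); rewrite expr0.
move=> u v huv; apply: NNPP => hn.
have hu : ~ J u by move=> h; apply: hn; left.
have hv : ~ J v by move=> h; apply: hn; right.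
have ext : forall w, ~ J w -> exists n j r, J j /\ x ^+ n = j + r * w.
  move=> w hw; apply: NNPP => hne.
  pose J' y := exists j r, J j /\ y = j + r * w.
  have hJ' : avoids a x J'.
    split; last split.
    - split; first by exists 0, 0; split; [exact: id0 | rewrite mul0r addr0].
      split.
        move=> y z [j1 [r1 [h1 ->]]] [j2 [r2 [h2 ->]]]; exists (j1 + j2), (r1 + r2); split; first exact: idD.
        ring.
      move=> r y [j1 [r1 [h1 ->]]]; exists (r * j1), (r * r1); split; first exact: idM.
      ring.
    - by move=> r hr; exists r, 0; split; [exact: haJ | rewrite mul0r addr0].
    - by move=> n [j [r [hj he]]]; apply: hne; exists n, j, r.
  apply: hw; apply: (hmax J' hJ').
    by move=> r hr; exists r, 0; split => //; rewrite mul0r addr0.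
  by exists 0, 1; split; [exact: id0 | rewrite mul1r add0r].
have [n [j1 [r1 [h1 e1]]]] := ext u hu.
have [m [j2 [r2 [h2 e2]]]] := ext v hv.
apply: (hxJ (n + m)%N); rewrite exprD e1 e2.
have -> : (j1 + r1 * u) * (j2 + r2 * v) = j1 * (j2 + r2 * v) + (r1 * u * j2 + (r1 * r2) * (u * v)) by ring.
apply: idD => //; first by apply: idMr.
apply: idD => //; first by apply: idM.
by apply: idM.
Qed.

End Aux.

Lemma gen_in (R : comPzRingType) (I : R -> Prop) (s : seq R) :
  (forall x, I x <-> exists c : seq R, size c = size s /\ x = \sum_(i < size s) c`_i * s`_i) ->
  forall i, (i < size s)%N -> I s`_i.
Proof.
move=> hs i hi; apply/hs.
exists [seq (j == i)%:R | j <- iota 0 (size s)]; split; first by rewrite size_map size_iota.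
rewrite (bigD1 (Ordinal hi)) //= big1 ?addr0.
  by rewrite (nth_map 0%N) ?size_iota // nth_iota // add0n eqxx mul1r.
move=> j hj; rewrite (nth_map 0%N) ?size_iota // nth_iota // add0n.
rewrite (_ : (nat_of_ord j == i) = false) ?mul0r //; apply/negbTE; move: hj; apply: contra => /eqP hji; apply/eqP/val_inj; exact: hji.
Qed.

Section Mod.
Variable R : comPzRingType.
Variable M : lmodType R.

Lemma colon_prime (P : M -> Prop) : prime_submodule P -> prime_ideal (colon P).
Proof.
case=> [[P0 [PD PZ]] [[m0 hm0] Pp]].
split; last split.
- split; first by move=> m; rewrite scale0r.
  split; first by move=> x y hx hy m; rewrite scalerDl; apply: PD.
  by move=> r x hx m; rewrite -scalerA; apply: PZ.
- by move=> h; apply: hm0; have := h m0; rewrite scale1r.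
- move=> r s hrs; case: (classic (colon P r)) => hr; [by left | right].
  by move=> m; have := hrs m; rewrite -scalerA => /Pp [].
Qed.

Lemma point_of_prime (q : R -> Prop) : faithful M -> primeful M ->
  (exists P : M -> Prop, prime_submodule P) -> prime_ideal q ->
  exists P : M -> Prop, prime_submodule P /\ forall r, colon P r <-> q r.
Proof.
move=> hf [hz | hp] [P0 hP0] hq.
  exfalso; case: hP0 => [[h0 _] [[m hm] _]]; apply: hm; by rewrite (hz m).
apply: hp => // r /hf ->; case: hq => [[h0 _] _]; exact: h0.
Qed.

Lemma RL (a : R -> Prop) (x : R) : noetherian_ring R -> faithful M -> primeful M ->
  (exists P : M -> Prop, prime_submodule P) -> ideal a ->
  (forall P : M -> Prop, prime_submodule P -> (forall r, a r -> colon P r) -> colon P x) ->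
  exists e, a (x ^+ e).
Proof.
move=> noeth hf hpf hex ha H; apply: NNPP => hn.
have [q [hq [haq hxq]]] := krull noeth ha (fun n h => hn (ex_intro _ n h)).
have [P [hP hPq]] := point_of_prime hf hpf hex hq.
apply: hxq; apply/hPq; apply: H => // r /haq /hPq; done.
Qed.

End Mod.

Section Pig.
Variable R : comPzRingType.

Lemma pig (I : R -> Prop) (s : seq R) :
  (forall x, I x -> exists c : seq R, x = \sum_(i < size s) c`_i * s`_i) ->
  forall k (J : R -> Prop) (e : nat -> nat), ideal J ->
  (forall i, (i < size s)%N -> J (s`_i ^+ e i)) ->
  (\sum_(i < size s) e i < k + size s)%N ->
  forall y, ideal_pow I k y -> J y.
Proof.
move=> hI; elim=> [|k IH] J e hJ he hsum y.
  move=> _; have [i hi ei] : exists2 i, (i < size s)%N & e i = 0%N.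
    apply: NNPP => hn; move: hsum; apply/negP; rewrite -leqNgt.
    rewrite -[X in (X <= _)%N]card_ord -sum1_card.
    apply: leq_sum => j _; case: (posnP (e j)) => // ej.
    by exfalso; apply: hn; exists j.
  by have := he i hi; rewrite ei expr0 => h1; rewrite -[y]mulr1; apply: idM.
move=> [l [hl ->]]; apply: id_sum => // q /hl [hq1 hq2].
have [c ->] := hI _ hq1; rewrite mulr_suml; apply: id_sum_ord => // i.
rewrite -mulrA; apply: idM => //.
case: (posnP (e i)) => ei.
  by have := he i (ltn_ord i); rewrite ei expr0 => h1; rewrite -[_ * _]mulr1; apply: idM.
pose J' z := J (s`_i * z).
pose e' j := if j == nat_of_ord i then (e i).-1 else e j.
apply: (IH J' e') => //.
- split; first by rewrite /J' mulr0; apply: id0.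
  split; first by move=> a b ha hb; rewrite /J' mulrDr; apply: idD.
  by move=> r a ha; rewrite /J' mulrCA; apply: idM.
- move=> j hj; rewrite /J' /e'; case: eqP => [-> | _].
    rewrite -exprS prednK //; exact: (he i (ltn_ord i)).
  apply: idM => //; exact: (he j hj).
- rewrite (bigD1 i) //= in hsum; rewrite (bigD1 i) //=.
  rewrite /e' eqxx (eq_bigr (fun j : 'I_(size s) => e j)); last first.
    by move=> j hj; rewrite ifF //; apply/negbTE; move: hj; apply: contra => /eqP h; apply/eqP/val_inj.
  lia.
Qed.

End Pig.

Lemma colon_ideal (R : comPzRingType) (M : lmodType R) (K : M -> Prop) :
  submodule K -> ideal (colon K).
Proof.
case=> [K0 [KD KZ]]; split; first by move=> m; rewrite scale0r.
split; first by move=> x y hx hy m; rewrite scalerDl; apply: KD.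
by move=> r x hx m; rewrite -scalerA; apply: KZ.
Qed.

Lemma notV (R : comPzRingType) (M : lmodType R) (K P : M -> Prop) :
  prime_submodule P -> (~ Vset K P <-> exists r, colon K r /\ ~ colon P r).
Proof.
move=> hP; split.
  move=> hn; apply: NNPP => hne; apply: hn; split => // r hr; apply: NNPP => h; apply: hne; by exists r.
by case=> r [hr hnr] [_ H]; apply: hnr; apply: H.
Qed.

Lemma nc (P : Prop) : ~ P -> P -> False. Proof. by []. Qed.

Lemma scaleE (R : comPzRingType) (N : lmodType R) (a b c : R) (x y : N) :
  (a * b) *: x - c *: (a *: y) = a *: (b *: x - c *: y).
Proof. by rewrite scalerBr !scalerA [c * a]mulrC. Qed.

Lemma scale_comm0 (R : comPzRingType) (N : lmodType R) (a u : R) (v : N) :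
  u *: v = 0 -> u *: (a *: v) = 0.
Proof. by move=> h; rewrite scalerA mulrC -scalerA h scaler0. Qed.

Theorem proposition3p11 (R : comPzRingType) (M N : lmodType R) (K : M -> Prop) :
  noetherian_ring R ->
  faithful M -> primeful M -> (exists P : M -> Prop, prime_submodule P) ->
  submodule K ->
  coker_eps_torsion N (colon K)
    (fun P => prime_submodule P /\ ~ Vset K P).
Proof.
move=> noeth hf hpf hex hK g [gden gloc].
set U := (fun P => prime_submodule P /\ ~ Vset K P).
have hI : ideal (colon K) by apply: colon_ideal.
have RL' := fun a x => @RL R M a x noeth hf hpf hex.
have UE : forall P, U P <-> prime_submodule P /\ exists r, colon K r /\ ~ colon P r.
  move=> P; split; first by case=> hP /(notV _ hP) h.
  by case=> hP h; split => //; apply/(notV _ hP).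
have gd : forall P, U P -> ~ colon P (g (colon P)).2.
  by move=> P hP; apply: gden; exists P.
pose good (F : R) (G : N) :=
  (forall P, prime_submodule P -> ~ colon P F -> U P) /\
  (forall P, U P -> ~ colon P F -> exists u, ~ colon P u /\
       u *: (F *: (g (colon P)).1 - (g (colon P)).2 *: G) = 0).
have step1 : forall Q, U Q -> exists F G, good F G /\ ~ colon Q F.
  move=> Q hQ.
  have [W [[Wpr [L [hL WE]]] [WU [WQ [s [m hsm]]]]]] := gloc Q hQ.
  have [hQp [w [hw hnw]]] : prime_submodule Q /\ exists w, colon L w /\ ~ colon Q w.
    by case/WE: WQ => hQp /(notV _ hQp).
  have Wof : forall P, prime_submodule P -> ~ colon P w -> W P.
    by move=> P hP hn; apply/WE; split => //; apply/(notV _ hP); exists w.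
  have [e [c he]] : exists e, exists c, w ^+ e = c * s.
    have ha : ideal (fun y => exists c, y = c * s).
      split; first by exists 0; rewrite mul0r.
      split; first by move=> x y [c1 ->] [c2 ->]; exists (c1 + c2); rewrite mulrDl.
      by move=> r x [c1 ->]; exists (r * c1); rewrite mulrA.
    have [e [c hc]] : exists e, exists c, w ^+ e = c * s.
      apply: RL' ha _ => P hP hsub; apply: NNPP => hn.
      apply: (hsm P (Wof P hP hn)).1; apply: hsub; exists 1; by rewrite mul1r.
    by exists e, c.
  have Fe : w ^+ e.+1 = (w * c) * s by rewrite exprS he mulrA.
  have nw : forall P : M -> Prop, prime_submodule P -> ~ colon P (w ^+ e.+1) -> ~ colon P w.
    move=> P hP hn hcw; suff hh : colon P (w ^+ e.+1) by exact: hn hh. rewrite exprS. have hid : ideal (colon P) by case: (colon_prime hP). exact (idMr _ hid hcw).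
  exists (w ^+ e.+1), ((w * c) *: m); split; last first.
    by apply: prime_not_pow => //; apply: colon_prime.
  split.
    by move=> P hP hn; apply: WU; apply: Wof => //; apply: nw.
  move=> P hP hn; have hW := Wof P hP.1 (nw P hP.1 hn).
  have [_ [u [hu hu0]]] := hsm P hW.
  exists u; split => //.
  by rewrite Fe scaleE; apply: scale_comm0.
have [s hs] := noeth _ hI.
pose F0 (y : R) := exists l : seq ((R * R) * N), (forall t, t \in l -> good t.1.2 t.2) /\ y = \sum_(t <- l) t.1.1 * t.1.2.
have hF0 : ideal F0.
  split; first by exists [::]; split => //; rewrite big_nil.
  split.
    move=> x y [l1 [h1 ->]] [l2 [h2 ->]]; exists (l1 ++ l2); split; last by rewrite big_cat.
    by move=> t; rewrite mem_cat => /orP [] ?; [apply: h1 | apply: h2].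
  move=> r x [l [h ->]]; exists [seq ((r * t.1.1, t.1.2), t.2) | t <- l]; split.
    move=> t /mapP [t' ht' ->]; exact: (h t' ht').
  by rewrite big_map mulr_sumr; apply: eq_bigr => t _; rewrite mulrA.
have sI := gen_in hs.
have genF : forall y, y \in s -> exists e, F0 (y ^+ e).
  move=> y /(nthP 0) [i hi <-]; apply: RL' hF0 _ => P hP hsub; apply: NNPP => hn.
  have hU : U P by apply/UE; split => //; exists s`_i; split => //; exact: sI.
  have [F [G [hg hnF]]] := step1 P hU.
  apply: (nc hnF); apply (hsub F); exists [:: ((1, F), G)]; split; first by move=> t; rewrite inE => /eqP ->.
  by rewrite big_seq1 mul1r.
have [L [Lgood Lcov]] : exists L : seq (R * N), (forall t, t \in L -> good t.1 t.2) /\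
    forall P, U P -> exists2 t, t \in L & ~ colon P t.1.
  suff H : forall s0 : seq R, (forall y, y \in s0 -> exists e, F0 (y ^+ e)) ->
     exists L : seq (R * N), (forall t, t \in L -> good t.1 t.2) /\
     forall P : M -> Prop, prime_submodule P -> forall y, y \in s0 -> ~ colon P y -> exists2 t, t \in L & ~ colon P t.1.
    have [L [hL1 hL2]] := H s genF; exists L; split => // P hP.
    have [hPp [r [hr hnr]]] := (UE P).1 hP.
    have [i hi hni] : exists2 i, (i < size s)%N & ~ colon P s`_i.
      apply: NNPP => hne; apply: (nc hnr); have [c [_ ->]] := (hs r).1 hr.
      apply (@id_sum_ord _ (colon P)); first by case: (colon_prime hPp).
      move=> i; apply (@idM _ (colon P)); first by case: (colon_prime hPp).
      apply: NNPP => h; apply: hne; by exists i.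
    exact: hL2 hPp s`_i (mem_nth 0 hi) hni.
  elim=> [|y s0 IH] H.
    by exists [::]; split => // P _ y.
  have [e [l [hl he]]] := H y (mem_head _ _).
  have [L' [hL1 hL2]] : exists L' : seq (R * N), (forall t, t \in L' -> good t.1 t.2) /\
     forall P : M -> Prop, prime_submodule P -> forall y, y \in s0 -> ~ colon P y -> exists2 t, t \in L' & ~ colon P t.1.
    by apply: IH => z hz; apply: H; rewrite in_cons hz orbT.
  exists ([seq (t.1.2, t.2) | t <- l] ++ L'); split.
    move=> t; rewrite mem_cat => /orP [/mapP [t' ht' ->] | ht]; [exact: hl | exact: hL1].
  move=> P hP z; rewrite in_cons => /orP [/eqP -> | hz] hnz; last first.
    have [t ht htn] := hL2 P hP z hz hnz; exists t => //; by rewrite mem_cat ht orbT.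
  have hne : ~ colon P (y ^+ e) by apply: prime_not_pow => //; apply: colon_prime.
  have [t ht htn] : exists2 t, t \in l & ~ colon P t.1.2.
    apply: NNPP => hn; apply: (nc hne); rewrite he; apply (@id_sum _ (colon P)); first by case: (colon_prime hP).
    move=> t ht; apply (@idM _ (colon P)); first by case: (colon_prime hP).
    apply: NNPP => h; apply: hn; by exists t.
  exists (t.1.2, t.2) => //; rewrite mem_cat; apply/orP; left; apply/mapP; by exists t.
have compat1 : forall t1 t2, t1 \in L -> t2 \in L -> exists e,
    (t1.1 * t2.1) ^+ e *: (t2.1 *: t1.2 - t1.1 *: t2.2) = 0.
  move=> [F1 G1] [F2 G2] h1 h2 /=.
  have [g11 g12] := Lgood _ h1; have [g21 g22] := Lgood _ h2; simpl in *.
  set z := F2 *: G1 - F1 *: G2.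
  have ha : ideal (fun r => r *: z = 0).
    split; first by rewrite scale0r.
    split; first by move=> x y hx hy; rewrite scalerDl hx hy addr0.
    by move=> r x hx; rewrite -scalerA hx scaler0.
  apply: RL' ha _ => P hP hsub; apply: NNPP => hn.
  have hp := colon_prime hP.
  have hn1 : ~ colon P F1 by move=> h; apply: (nc hn); apply (@idMr _ (colon P)) => //; case: hp.
  have hn2 : ~ colon P F2 by move=> h; apply: (nc hn); apply (@idM _ (colon P)) => //; case: hp.
  have hU := g11 P hP hn1.
  have [u1 [hu1 e1]] := g12 P hU hn1.
  have [u2 [hu2 e2]] := g22 P hU hn2.
  apply: (nc (prime_notM hp (prime_notM hp hu1 hu2) (gd P hU))); apply (hsub (u1 * u2 * (g (colon P)).2)).
  move: e1 e2; set g1 := (g (colon P)).1; set g2 := (g (colon P)).2 => e1 e2.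
  have e1' : (u1 * F1) *: g1 = (u1 * g2) *: G1 by apply/eqP; rewrite -subr_eq0 -!scalerA -scalerBr e1.
  have e2' : (u2 * F2) *: g1 = (u2 * g2) *: G2 by apply/eqP; rewrite -subr_eq0 -!scalerA -scalerBr e2.
  have -> : (u1 * u2 * g2) *: z = (u2 * F2) *: ((u1 * g2) *: G1) - (u1 * F1) *: ((u2 * g2) *: G2).
    rewrite /z scalerBr !scalerA; congr (_ *: _ - _ *: _); ring.
  by rewrite -e1' -e2' !scalerA mulrC subrr.
have [C hC] : exists C, forall t1, t1 \in L -> forall t2, t2 \in L ->
    (t1.1 * t2.1) ^+ C *: (t2.1 *: t1.2 - t1.1 *: t2.2) = 0.
  have mono : forall x (v : N) n m, (n <= m)%N -> x ^+ n *: v = 0 -> x ^+ m *: v = 0.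
    move=> x v n m /subnK <- h; by rewrite exprD -scalerA h scaler0.
  apply: (@uniform_bound _ (fun n t1 => forall t2, t2 \in L ->
     (t1.1 * t2.1) ^+ n *: (t2.1 *: t1.2 - t1.1 *: t2.2) = 0)).
    move=> n m t1 hnm h t2 ht2; exact: mono (h t2 ht2).
  move=> t1 ht1; apply: (@uniform_bound _ (fun n t2 =>
     (t1.1 * t2.1) ^+ n *: (t2.1 *: t1.2 - t1.1 *: t2.2) = 0)).
    by move=> n m t2 hnm; apply: mono.
  move=> t2 ht2; exact: compat1.
pose J (r : R) := exists n : N, forall P, U P -> exists u, ~ colon P u /\
    u *: (r *: (g (colon P)).1 - (g (colon P)).2 *: n) = 0.
have hJ : ideal J.
  split.
    exists 0 => P hP; exists 1; split; first by case: (colon_prime hP.1) => _ [].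
    by rewrite scale0r scaler0 subrr scaler0.
  split.
    move=> x y [n1 h1] [n2 h2]; exists (n1 + n2) => P hP.
    have [u1 [hu1 e1]] := h1 P hP; have [u2 [hu2 e2]] := h2 P hP.
    exists (u1 * u2); split; first exact: prime_notM (colon_prime hP.1) hu1 hu2.
    rewrite scalerDl [_ *: (n1 + n2)]scalerDr opprD addrACA scalerDr.
    have -> : (u1 * u2) *: (x *: (g (colon P)).1 - (g (colon P)).2 *: n1) = 0.
      by rewrite mulrC -scalerA e1 scaler0.
    by rewrite -scalerA e2 scaler0 addr0.
  move=> r x [n h]; exists (r *: n) => P hP; have [u [hu e]] := h P hP; exists u; split => //.
  by rewrite scaleE; apply: scale_comm0.
have FJ : forall t, t \in L -> J (t.1 ^+ C.+1).
  move=> [F G] ht /=; exists (F ^+ C *: G) => P hP.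
  have [[F' G'] ht' hnF'] := Lcov P hP; simpl in hnF'.
  have [_ g2'] := Lgood _ ht'; have [u0 [hu0 e0]] := g2' P hP hnF'.
  have hc := hC _ ht _ ht'; simpl in hc, e0.
  have hp := colon_prime hP.1.
  exists (u0 * (F' * F' ^+ C)); split.
    exact (prime_notM hp hu0 (prime_notM hp hnF' (prime_not_pow hp hnF'))).
  move: e0 hc; set g1 := (g (colon P)).1; set g2 := (g (colon P)).2 => e0 hc.
  have e0' : (u0 * F') *: g1 = (u0 * g2) *: G' by apply/eqP; rewrite -subr_eq0 -!scalerA -scalerBr e0.
  have hc' : ((F ^+ C * F' ^+ C) * F') *: G = ((F ^+ C * F' ^+ C) * F) *: G'.
    by move: hc; rewrite exprMn scalerBr !scalerA => hc; apply/eqP; rewrite -subr_eq0 hc.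
  have -> : (u0 * (F' * F' ^+ C)) *: (F ^+ C.+1 *: g1 - g2 *: (F ^+ C *: G)) =
     (F * F ^+ C * F' ^+ C) *: ((u0 * F') *: g1) - (u0 * g2) *: ((F ^+ C * F' ^+ C * F') *: G).
    rewrite exprS scalerBr !scalerA; congr (_ *: _ - _ *: _); ring.
  by rewrite e0' hc' !scalerA; apply/eqP; rewrite subr_eq0; apply/eqP; congr (_ *: _); ring.
have sJ : forall y, y \in s -> exists e, J (y ^+ e).
  move=> y /(nthP 0) [i hi <-]; apply: RL' hJ _ => P hP hsub; apply: NNPP => hn.
  have hU : U P by apply/UE; split => //; exists s`_i; split => //; exact: sI.
  have [t ht hnt] := Lcov P hU.
  apply: (nc (prime_not_pow (colon_prime hP) hnt)); apply (hsub _ (FJ t ht)).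
have [E hE] : exists E, forall y, y \in s -> J (y ^+ E).
  apply: (@uniform_bound _ (fun n y => J (y ^+ n))) => //.
  move=> n m y hnm; exact: id_pow_closed.
exists ((size s * E).+1) => r hr.
have hJr : J r.
  apply: (@pig R (colon K) s _ (size s * E).+1 J (fun=> E) hJ _ _ r hr).
  - move=> x /hs [c [_ ->]]; by exists c.
  - move=> i hi; apply: hE; exact: mem_nth.
  - rewrite sum_nat_const card_ord; lia.
case: hJr => n hn; exists n => p [P [hP ->]].
have [u [hu e]] := hn P hP; exists u; split => //=.
by rewrite scale1r.
Qed.
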